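(* Let $\mathbf{k}$ be an algebraically closed field of characteristic zero, $\mathcal{A}=\mathbf{k}[x_1,\ldots,x_n]$, $\mathcal{V}=\bigoplus_{i=1}^n\mathcal{A}\frac{\partial}{\partial x_i}$, $\mathcal{L}_+\subset\mathcal{V}$ the subalgebra of vector fields vanishing at the origin, and $\mathcal{D}$ the Weyl algebra. The map $\psi:\mathcal{D}\otimes U(\mathcal{L}_+)\to\mathcal{A}\# U(\mathcal{V})$ defined by $$\psi\left(x^r\partial^s\right)=x^r\#\left(\frac{\partial}{\partial x_1}\right)^{s_1}\cdots\left(\frac{\partial}{\partial x_n}\right)^{s_n}\ \text{on }\mathcal{D},\qquad \psi\left(x^m\frac{\partial}{\partial x_p}\right)=\sum_{0\leq k\leq m}(-1)^{m-k}\binom{m}{k}x^{m-k}\# x^k\frac{\partial}{\partial x_p}\ \text{on }\mathcal{L}_+\ (m\ne0),$$ extends to a (well-defined) homomorphism of associative algebras.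
   Context: Multi-index notation: $x^r=x_1^{r_1}\cdots x_n^{r_n}$, $\partial^s=(\partial/\partial x_1)^{s_1}\cdots(\partial/\partial x_n)^{s_n}$; $k\le m$ componentwise; $\binom{m}{k}=\prod_i\binom{m_i}{k_i}$; $(-1)^{s}=(-1)^{s_1+\cdots+s_n}$. $\mathcal{L}_+$ is spanned by $x^m\frac{\partial}{\partial x_p}$ with $m\ne 0$. The smash product $\mathcal{A}\# U(\mathcal{V})$ is $\mathcal{A}\otimes U(\mathcal{V})$ with product $(f\# u)(g\# v)=\sum_i f\,u_i^{(1)}(g)\# u_i^{(2)}v$ where $\Delta(u)=\sum_i u_i^{(1)}\otimes u_i^{(2)}$ is the coproduct; in particular $(1\#\eta)(f\#1)=f\#\eta+\eta(f)\#1$ for $\eta\in\mathcal{V}$, $f\in\mathcal{A}$. *)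

(* Defs.v *)
From HB Require Import structures.
From mathcomp Require Import all_boot all_order all_algebra.
From mathcomp Require Export mpoly.
Set Implicit Arguments. Unset Strict Implicit. Unset Printing Implicit Defensive.
Import Order.TTheory GRing.Theory Num.Theory.
Local Open Scope ring_scope.

Section Defs.
Variables (k : fieldType) (n : nat).

Notation A := {mpoly k[n]}.
(* V = (+)_i A d/dx_i : the vector field sum_i v i * d/dx_i is v. *)
Definition vfield := {ffun 'I_n -> A}.

Definition vact (v : vfield) (f : A) : A := \sum_(j < n) v j * f^`M(j).

Definition vbracket (u v : vfield) : vfield :=
  [ffun i => vact u (v i) - vact v (u i)].

Definition Lplus (v : vfield) : Prop := forall i, (v i)@_0%MM = 0.

Definition xd (m : 'X_{1..n}) (p : 'I_n) : vfield :=
  [ffun i => if i == p then 'X_[m] else 0].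

Definition dvec (p : 'I_n) : vfield := xd 0%MM p.

Definition mbinom (m l : 'X_{1..n}) : nat := \prod_(i < n) 'C(m i, l i).

Definition is_alg_hom (S T : algType k) (phi : S -> T) : Prop :=
  [/\ {morph phi : x y / x + y}, {morph phi : x y / x * y}, phi 1 = 1
    & forall (a : k) x, phi (a *: x) = a *: phi x].

(* Relations defining D (x) U(L_+): Weyl generators X_i, D_i, a Lie map   *)
(* j from L_+ (k-linear, brackets to commutators), and D commuting with   *)
(* the image of L_+.                                                      *)
Definition DUL_rel (B : algType k) (X Dd : 'I_n -> B) (j : vfield -> B) : Prop :=
  [/\ [/\ (forall i l, X i * X l = X l * X i),
      (forall i l, Dd i * Dd l = Dd l * Dd i)
    & (forall i l, Dd i * X l - X l * Dd i = (i == l)%:R)],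
      (forall (a : k) u v, Lplus u -> Lplus v ->
          j (a *: u + v) = a *: j u + j v),
      (forall u v, Lplus u -> Lplus v ->
          j (vbracket u v) = j u * j v - j v * j u),
      (forall i u, Lplus u -> X i * j u = j u * X i)
    & (forall i u, Lplus u -> Dd i * j u = j u * Dd i)].

(* (S, X, Dd, j) is (a model of) the algebra D (x) U(L_+), i.e. the        *)
(* universal k-algebra for the relations above (universal property of     *)
(* the Weyl algebra, of U(L_+), and of the tensor product of algebras).    *)
Definition is_DUL (S : algType k) (X Dd : 'I_n -> S) (j : vfield -> S) : Prop :=
  DUL_rel X Dd j /\
  forall (B : algType k) (X' Dd' : 'I_n -> B) (j' : vfield -> B),
    DUL_rel X' Dd' j' ->
    exists phi : S -> B,
      [/\ is_alg_hom phi,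
          (forall i, phi (X i) = X' i),
          (forall i, phi (Dd i) = Dd' i),
          (forall u, Lplus u -> phi (j u) = j' u)
        & forall psi : S -> B, is_alg_hom psi ->
            (forall i, psi (X i) = X' i) ->
            (forall i, psi (Dd i) = Dd' i) ->
            (forall u, Lplus u -> psi (j u) = j' u) ->
            forall s, psi s = phi s].

(* Relations defining the smash product A # U(V): iA : f |-> f # 1 is an *)
(* algebra map, iV : eta |-> 1 # eta a Lie map, and                        *)
(* (1 # eta)(f # 1) = f # eta + eta(f) # 1, where f # eta = (f#1)(1#eta). *)
Definition smash_rel (B : algType k) (iA : A -> B) (iV : vfield -> B) : Prop :=
  [/\ is_alg_hom iA,
      (forall (a : k) u v, iV (a *: u + v) = a *: iV u + iV v),
      (forall u v, iV (vbracket u v) = iV u * iV v - iV v * iV u)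
    & (forall eta f, iV eta * iA f = iA f * iV eta + iA (vact eta f))].

(* (T, iA, iV) is (a model of) the smash product A # U(V): the universal   *)
(* k-algebra for the relations above.                                      *)
Definition is_smash (T : algType k) (iA : A -> T) (iV : vfield -> T) : Prop :=
  smash_rel iA iV /\
  forall (B : algType k) (iA' : A -> B) (iV' : vfield -> B),
    smash_rel iA' iV' ->
    exists phi : T -> B,
      [/\ is_alg_hom phi,
          (forall f, phi (iA f) = iA' f),
          (forall u, phi (iV u) = iV' u)
        & forall psi : T -> B, is_alg_hom psi ->
            (forall f, psi (iA f) = iA' f) ->
            (forall u, psi (iV u) = iV' u) ->
            forall t, psi t = phi t].

Definition psiL (T : algType k) (iA : A -> T) (iV : vfield -> T)
    (m : 'X_{1..n}) (p : 'I_n) : T :=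
  \sum_(l : 'X_{1..n < (mdeg m).+1} | (bmnm l <= m)%MM)
     ((-1) ^+ mdeg (m - bmnm l)%MM * (mbinom m l)%:R) *:
        (iA 'X_[(m - bmnm l)%MM] * iV (xd l p)).

End Defs.

(* Main.v *)
Require Import Defs.
From HB Require Import structures.
From mathcomp Require Import all_boot all_order all_algebra.
From mathcomp Require Import mpoly.
From mathcomp.multinomials Require Import ssrcomplements.
Import GRing.Theory.
Local Open Scope ring_scope.
Set Warnings "-notation-overridden,-ambiguous-paths,-notation-incompatible-prefix".

Section Poly.
Variable k : fieldType.
Variable n : nat.
Local Notation A := {mpoly k[n]}.
Local Notation B := {mpoly A[n]}.

Fact emb_key : unit. Proof. by []. Qed.
Fact mapd_key : unit. Proof. by []. Qed.
Fact Sh_key : unit. Proof. by []. Qed.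
Fact mu_key : unit. Proof. by []. Qed.
Definition emb : A -> B := locked_with emb_key (fun g : A => map_mpoly (@mpolyC n k) g).
Definition mapd (i : 'I_n) : B -> B := locked_with mapd_key (fun P : B => map_mpoly (mderiv i) P).
Definition lqS : n.-tuple B := [tuple ('X_i - ('X_i : A)%:MP) | i < n].
Definition Sh : A -> B := locked_with Sh_key (fun f : A => comp_mpoly lqS (emb f)).
Definition mu : B -> A := locked_with mu_key (fun P : B => P.@[fun i => 'X_i]).

Lemma embE g : emb g = map_mpoly (@mpolyC n k) g. Proof. by rewrite /emb; case: emb_key. Qed.
Lemma mapdE i P : mapd i P = map_mpoly (mderiv i) P. Proof. by rewrite /mapd; case: mapd_key. Qed.
Lemma ShE f : Sh f = comp_mpoly lqS (emb f). Proof. by rewrite /Sh; case: Sh_key. Qed.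
Lemma muE' P : mu P = P.@[fun i => 'X_i]. Proof. by rewrite /mu; case: mu_key. Qed.

Lemma embM g h : emb (g * h) = emb g * emb h. Proof. by rewrite !embE rmorphM. Qed.
Lemma embD g h : emb (g + h) = emb g + emb h. Proof. by rewrite !embE rmorphD. Qed.
Lemma embZ (c : k) g : emb (c *: g) = c%:MP *: emb g. Proof. by rewrite !embE map_mpolyZ. Qed.
Lemma embX m : emb 'X_[m] = 'X_[m]. Proof. by rewrite !embE map_mpolyX. Qed.
Lemma emb1 : emb 1 = 1. Proof. by rewrite !embE rmorph1. Qed.
Lemma emb0 : emb 0 = 0. Proof. by rewrite !embE raddf0. Qed.
Lemma emb_sum (I : Type) (r : seq I) (F : I -> A) :
  emb (\sum_(j <- r) F j) = \sum_(j <- r) emb (F j).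
Proof. exact: (big_morph _ embD emb0). Qed.
Lemma emb_nat (m : nat) : emb m%:R = m%:R.
Proof. by rewrite embE rmorph_nat. Qed.
Lemma embC (c : k) : emb c%:MP = (c%:MP)%:MP.
Proof. by rewrite embE map_mpolyC. Qed.

Lemma ShM f g : Sh (f * g) = Sh f * Sh g. Proof. by rewrite !ShE embM rmorphM. Qed.
Lemma ShD f g : Sh (f + g) = Sh f + Sh g. Proof. by rewrite !ShE embD raddfD. Qed.
Lemma ShZ (c : k) f : Sh (c *: f) = c%:MP *: Sh f. Proof. by rewrite !ShE embZ comp_mpolyZ. Qed.
Lemma Sh1 : Sh 1 = 1. Proof. by rewrite ShE emb1 rmorph1. Qed.
Lemma Sh0 : Sh 0 = 0. Proof. by rewrite ShE emb0 raddf0. Qed.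
Lemma ShN f : Sh (- f) = - Sh f.
Proof. by rewrite !ShE !embE !raddfN. Qed.
Lemma ShB f g : Sh (f - g) = Sh f - Sh g. Proof. by rewrite ShD ShN. Qed.
Lemma ShXU i : Sh 'X_i = 'X_i - ('X_i : A)%:MP.
Proof. by rewrite ShE embX comp_mpolyXU /lqS -tnth_nth tnth_mktuple. Qed.
Lemma Sh_sum (I : Type) (r : seq I) (F : I -> A) :
  Sh (\sum_(i <- r) F i) = \sum_(i <- r) Sh (F i).
Proof. exact: (big_morph _ ShD Sh0). Qed.
Lemma Sh_nat (m : nat) : Sh m%:R = m%:R.
Proof. by rewrite ShE emb_nat rmorph_nat. Qed.

Lemma mcoeff_mapd i (P : B) m : (mapd i P)@_m = (P@_m)^`M(i).
Proof. rewrite mapdE; exact: (@mcoeff_map_mpoly n A A (mderiv i)). Qed.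
Lemma mapdD i P Q : mapd i (P + Q) = mapd i P + mapd i Q.
Proof. by rewrite !mapdE raddfD. Qed.
Lemma mapdB i P Q : mapd i (P - Q) = mapd i P - mapd i Q.
Proof. by rewrite !mapdE raddfB. Qed.
Lemma mapdC i (a : A) : mapd i a%:MP = (a^`M(i))%:MP.
Proof. by rewrite !mapdE map_mpolyC. Qed.
Lemma mapd0 i : mapd i 0 = 0.
Proof. by rewrite !mapdE raddf0. Qed.
Lemma mapd_sum i (I : Type) (r : seq I) (F : I -> B) :
  mapd i (\sum_(j <- r) F j) = \sum_(j <- r) mapd i (F j).
Proof. exact: (big_morph _ (mapdD i) (mapd0 i)). Qed.
Lemma mapdwE i (P : B) (d : nat) : (msize P <= d)%N ->
  mapd i P = \sum_(m : 'X_{1..n < d}) (P@_m)^`M(i) *: 'X_[m].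
Proof. by move=> h; rewrite mapdE (map_mpolyE _ h). Qed.

Lemma muE (P : B) : mu P = \sum_(m <- msupp P) P@_m * 'X_[m].
Proof. by rewrite muE' mevalE; apply: eq_bigr => m _; rewrite mpolyXE_id. Qed.
Lemma muD P Q : mu (P + Q) = mu P + mu Q. Proof. by rewrite !muE' mevalD. Qed.
Lemma muM P Q : mu (P * Q) = mu P * mu Q. Proof. by rewrite !muE' mevalM. Qed.
Lemma muZ (a : A) P : mu (a *: P) = a * mu P. Proof. by rewrite !muE' mevalZ. Qed.
Lemma mu1 : mu 1 = 1. Proof. by rewrite !muE' rmorph1. Qed.
Lemma muC (a : A) : mu a%:MP = a. Proof. by rewrite !muE' mevalC. Qed.
Lemma muXU i : mu 'X_i = 'X_i. Proof. by rewrite !muE' mevalXU. Qed.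
Lemma muB P Q : mu (P - Q) = mu P - mu Q. Proof. by rewrite !muE' mevalB. Qed.

Lemma A_ind (P : A -> Prop) :
  P 1 -> (forall i, P 'X_i) ->
  (forall c f, P f -> P (c *: f)) ->
  (forall f g, P f -> P g -> P (f + g)) ->
  (forall f g, P f -> P g -> P (f * g)) ->
  forall f, P f.
Proof.
move=> P1 PX PZ PD PM f.
have P0 : P 0 by rewrite -(scale0r 1); apply: PZ.
rewrite (mpolyE f); elim/big_ind: _ => // m _.
apply: PZ; rewrite mpolyXE_id; elim/big_ind: _ => // i _.
by elim: (m i) => [|e IH]; rewrite ?expr0 // exprS; apply: PM.
Qed.

Lemma der_uniq (D1 D2 : A -> B) :
  (forall f g, D1 (f + g) = D1 f + D1 g) ->
  (forall f g, D2 (f + g) = D2 f + D2 g) ->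
  (forall c f, D1 (c *: f) = c%:MP *: D1 f) ->
  (forall c f, D2 (c *: f) = c%:MP *: D2 f) ->
  (forall f g, D1 (f * g) = D1 f * Sh g + Sh f * D1 g) ->
  (forall f g, D2 (f * g) = D2 f * Sh g + Sh f * D2 g) ->
  D1 1 = D2 1 -> (forall i, D1 'X_i = D2 'X_i) ->
  forall f, D1 f = D2 f.
Proof.
move=> D1D D2D D1Z D2Z D1M D2M E1 EX; elim/A_ind => //.
- by move=> c f E; rewrite D1Z D2Z E.
- by move=> f g Ef Eg; rewrite D1D D2D Ef Eg.
- by move=> f g Ef Eg; rewrite D1M D2M Ef Eg.
Qed.

Lemma mderivXU (R : nzRingType) (i j : 'I_n) :
  ('X_j : {mpoly R[n]})^`M(i) = (j == i)%:R.
Proof.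
rewrite mderivX mnm1E; case: eqP => [->|_]; last by rewrite scale0r.
have -> : (U_(i) - U_(i) = 0)%MM by apply/mnmP => l; rewrite mnmBE mnm0E subnn.
by rewrite mpolyX0 scale1r.
Qed.

Lemma mapdZ i (a : k) P : mapd i (a%:MP *: P) = a%:MP *: mapd i P.
Proof.
apply/mpolyP => m; rewrite [LHS]mcoeff_mapd [in LHS]mcoeffZ [RHS]mcoeffZ.
by rewrite [in RHS]mcoeff_mapd -mderiv_mulC.
Qed.
Lemma mapdX i m : mapd i 'X_[m] = 0.
Proof.
apply/mpolyP => l; rewrite [LHS]mcoeff_mapd [in LHS]mcoeffX [RHS]mcoeff0.
by rewrite -mpolyC_nat mderivC.
Qed.
Lemma mapdM i P Q : mapd i (P * Q) = mapd i P * Q + P * mapd i Q.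
Proof.
apply/mpolyP => m; rewrite [LHS]mcoeff_mapd [in LHS]mcoeffM raddf_sum.
rewrite [RHS]mcoeffD. rewrite [X in _ = X + _]mcoeffM [X in _ = _ + X]mcoeffM -big_split.
apply: eq_bigr => l _ /=. rewrite [X in _ = X * _ + _]mcoeff_mapd [X in _ = _ + _ * X]mcoeff_mapd.
by rewrite mderivM.
Qed.
Lemma chain i f : (Sh f)^`M(i) = Sh (f^`M(i)).
Proof.
apply: (@der_uniq (fun f => (Sh f)^`M(i)) (fun f => Sh (f^`M(i)))).
- by move=> f1 g1; rewrite ShD mderivD.
- by move=> f1 g1; rewrite mderivD ShD.
- by move=> c f1; rewrite ShZ mderivZ.
- by move=> c f1; rewrite mderivZ ShZ.
- by move=> f1 g1; rewrite ShM mderivM.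
- by move=> f1 g1; rewrite mderivM ShD !ShM.
- by rewrite Sh1 -mpolyC1 !mderivC Sh0.
- by move=> j; rewrite ShXU mderivB mderivC subr0 !mderivXU Sh_nat.
Qed.
Lemma mapd_Sh i f : mapd i (Sh f) = - Sh (f^`M(i)).
Proof.
apply: (@der_uniq (fun f => mapd i (Sh f)) (fun f => - Sh (f^`M(i)))).
- by move=> f1 g1; rewrite ShD mapdD.
- by move=> f1 g1; rewrite mderivD ShD opprD.
- by move=> c f1; rewrite ShZ mapdZ.
- by move=> c f1; rewrite mderivZ ShZ scalerN.
- by move=> f1 g1; rewrite ShM mapdM.
- by move=> f1 g1; rewrite mderivM ShD !ShM opprD mulNr mulrN.
- by rewrite Sh1 -mpolyC1 mapdC !mderivC Sh0 oppr0 mpolyC0.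
- move=> j; rewrite ShXU mapdB mapdC mapdX sub0r mderivXU.
  by rewrite Sh_nat mpolyC_nat.
Qed.
Lemma mu_Sh f : mu (Sh f) = (f@_0%MM)%:MP.
Proof.
elim/A_ind: f.
- by rewrite Sh1 mu1 mcoeff1 eqxx mpolyC1.
- move=> i; rewrite ShXU muB muXU muC mcoeffX.
  by rewrite subrr mnm1_eq0 mpolyC0.
- by move=> c f IH; rewrite ShZ muZ IH mcoeffZ mpolyCM.
- by move=> f g Hf Hg; rewrite ShD muD Hf Hg mcoeffD mpolyCD.
- by move=> f g Hf Hg; rewrite ShM muM Hf Hg rmorphM mpolyCM.
Qed.

Lemma leq_mdeg (m : 'X_{1..n}) i : (m i <= mdeg m)%N.
Proof. by rewrite mdegE (bigD1 i) //= leq_addr. Qed.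

Lemma prod_binom (R : comNzRingType) (y z : 'I_n -> R) (m : 'X_{1..n}) :
  \prod_(i < n) (z i + y i) ^+ m i =
  \sum_(l : 'X_{1..n < (mdeg m).+1} | (bmnm l <= m)%MM)
     \prod_(i < n) (z i ^+ (m i - l i) * y i ^+ l i *+ 'C(m i, l i)).
Proof.
set d := mdeg m.
pose G (i : 'I_n) (j : 'I_d.+1) := z i ^+ (m i - j) * y i ^+ j *+ 'C(m i, j).
have E1 : forall i, (z i + y i) ^+ m i = \sum_(j < d.+1) G i j.
  move=> i; rewrite exprDn (big_ord_widen d.+1 (fun j => z i ^+ (m i - j) * y i ^+ j *+ 'C(m i, j))); last by rewrite ltnS leq_mdeg.
  rewrite big_mkcond /=; apply: eq_bigr => j _; case: ifP => // hj.
  by rewrite /G bin_small ?mulr0n // ltnNge -ltnS hj.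
rewrite (eq_bigr _ (fun i _ => E1 i)) bigA_distr_bigA /=.
pose h' (l : 'X_{1..n < d.+1}) : {ffun 'I_n -> 'I_d.+1} := [ffun i => inord (l i)].
pose h (f : {ffun 'I_n -> 'I_d.+1}) : 'X_{1..n < d.+1} :=
  insubd (@bm0 n d) (Multinom [tuple (nat_of_ord (f i)) | i < n]).
have hl : forall l : 'X_{1..n < d.+1}, forall i, (l i < d.+1)%N.
  move=> l i; apply: (leq_ltn_trans (leq_mdeg _ i)); exact: bmdeg.
rewrite (reindex_onto h h'); last first.
  move=> l _; apply: val_inj; rewrite /h val_insubd.
  have -> : Multinom [tuple (nat_of_ord (h' l i)) | i < n] = l.
    by apply/mnmP => i; rewrite mnmE ffunE inordK.
  by rewrite bmdeg.
rewrite [RHS]big_mkcond /=; apply: eq_bigr => f _.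
have hmul : forall (g : {ffun 'I_n -> 'I_d.+1}), (forall i, (g i <= m i)%N) ->
    val (h g) = Multinom [tuple (nat_of_ord (g i)) | i < n].
  move=> g hg; rewrite /h val_insubd; case: ifP => // /negP []; rewrite ltnS.
  rewrite mdegE; apply: (@leq_trans (\sum_i m i)); first by apply: leq_sum => i _; rewrite mnmE.
  by rewrite -mdegE.
case: ifP => [/andP [_ /eqP hf] | hc].
  apply: eq_bigr => i _; rewrite /G.
  have -> : (f i : nat) = h f i by rewrite -{1}hf ffunE inordK.
  by [].
case: (boolP [forall i, (f i <= m i)%N]) => [/forallP hle | /forallPn [i hi]].
  suff : (h f <= m)%MM && (h' (h f) == f) by rewrite hc.
  apply/andP; split.
    by apply/mnm_lepP => i; rewrite (hmul _ hle) mnmE.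
  by apply/eqP/ffunP => i; rewrite ffunE (hmul _ hle) mnmE inord_val.
rewrite (bigD1 i) //= /G bin_small ?mulr0n ?mul0r //.
by rewrite ltnNge.
Qed.

Lemma emb_deriv i g : (emb g)^`M(i) = emb (g^`M(i)).
Proof.
rewrite {1}(mpolyE g) [in RHS](mpolyE g) emb_sum raddf_sum /= raddf_sum /= emb_sum.
apply: eq_bigr => m _.
rewrite embZ mderivZ embX mderivX [in RHS]mderivZ mderivX !embZ embX.
by rewrite mpolyC_nat.
Qed.
Lemma mu0 : mu 0 = 0. Proof. by rewrite muE msupp0 big_nil. Qed.
Lemma mu_sum (I : Type) (r : seq I) (F : I -> B) :
  mu (\sum_(j <- r) F j) = \sum_(j <- r) mu (F j).
Proof. exact: (big_morph _ muD mu0). Qed.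
Lemma muX m : mu 'X_[m] = 'X_[m].
Proof. by rewrite muE msuppX big_seq1 mcoeffX eqxx mul1r. Qed.
Lemma muwE (P : B) (d : nat) : (msize P <= d)%N ->
  mu P = \sum_(l : 'X_{1..n < d}) P@_l * 'X_[l].
Proof.
move=> h; rewrite {1}(mpolywE h) mu_sum; apply: eq_bigr => l _.
by rewrite muZ muX.
Qed.

Lemma prod_term (m l : 'X_{1..n}) :
  \prod_(i < n) ((- ('X_i : A)%:MP) ^+ (m i - l i) * ('X_i : B) ^+ l i *+ 'C(m i, l i))
  = (((-1) ^+ mdeg (m - l) * (mbinom m l)%:R) *: ('X_[m - l] : A)) *: ('X_[l] : B).
Proof.
set c := fun i : 'I_n => (('X_i : A)%:MP : B).
rewrite (eq_bigr (fun i => (((-1) ^+ (m i - l i) * ('C(m i, l i))%:R) *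
    c i ^+ (m i - l i)) * ('X_i : B) ^+ l i)); last first.
  move=> i _; rewrite [in LHS]exprNn -mulr_natr /c.
  by rewrite -!mulrA; congr (_ * _); rewrite mulrA mulrC.
rewrite big_split big_split /= -[\prod_(i < n) ('X_i : B) ^+ l i]mpolyXE_id big_split /= prodrXr -natr_prod.
rewrite -mul_mpolyC; congr (_ * _).
have -> : \prod_(i < n) c i ^+ (m i - l i) = (('X_[m - l] : A)%:MP : B).
  by rewrite mpolyXE_id rmorph_prod; apply: eq_bigr => i _; rewrite rmorphXn mnmBE.
rewrite -mul_mpolyC !rmorphM /= !rmorphXn /= !rmorphN1 !rmorph_nat.
have -> : mdeg (m - l) = (\sum_(i < n) (m i - l i))%N.
  by rewrite mdegE; apply: eq_bigr => i _; rewrite mnmBE.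
by [].
Qed.

End Poly.

Set Implicit Arguments. Unset Strict Implicit.
Section Smash.
Variable k : fieldType.
Variable n : nat.
Local Notation A := {mpoly k[n]}.
Local Notation B := {mpoly A[n]}.
Local Notation V := (vfield k n).
Local Notation mapd := (@mapd k n).
Local Notation Sh := (@Sh k n).
Local Notation mu := (@mu k n).
Local Notation emb := (@emb k n).
Variables (T : algType k) (iA : A -> T) (iV : V -> T).
Hypothesis HS : smash_rel iA iV.
Lemma iAD f g : iA (f + g) = iA f + iA g. Proof. by case: HS => -[]. Qed.
Lemma iAM f g : iA (f * g) = iA f * iA g. Proof. by case: HS => -[]. Qed.
Lemma iA1 : iA 1 = 1. Proof. by case: HS => -[]. Qed.
Lemma iAZ (c : k) f : iA (c *: f) = c *: iA f. Proof. by case: HS => -[]. Qed.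
Lemma iA0 : iA 0 = 0. Proof. by rewrite -(scale0r 0) iAZ scale0r. Qed.
Lemma iA_sum (I : Type) (r : seq I) (F : I -> A) :
  iA (\sum_(j <- r) F j) = \sum_(j <- r) iA (F j).
Proof. exact: (big_morph _ iAD iA0). Qed.
Lemma iAN f : iA (- f) = - iA f.
Proof. by rewrite -scaleN1r iAZ scaleN1r. Qed.
Lemma iAB f g : iA (f - g) = iA f - iA g. Proof. by rewrite iAD iAN. Qed.
Lemma iAC (c : k) : iA c%:MP = c%:A.
Proof. by rewrite -alg_mpolyC iAZ iA1. Qed.
Lemma iA_comm f g : iA f * iA g = iA g * iA f.
Proof. by rewrite -!iAM mulrC. Qed.

Lemma iVL (a : k) u v : iV (a *: u + v) = a *: iV u + iV v. Proof. by case: HS. Qed.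
Lemma iVbr u v : iV (vbracket u v) = iV u * iV v - iV v * iV u. Proof. by case: HS. Qed.
Lemma iVcomm u f : iV u * iA f = iA f * iV u + iA (vact u f). Proof. by case: HS. Qed.
Lemma iV0 : iV 0 = 0.
Proof.
have E := iVL 1 0 0; rewrite scaler0 addr0 scale1r in E.
by apply: (addrI (iV 0)); rewrite -E addr0.
Qed.
Lemma iVD u v : iV (u + v) = iV u + iV v.
Proof. by have := iVL 1 u v; rewrite !scale1r. Qed.
Lemma iVZ (a : k) u : iV (a *: u) = a *: iV u.
Proof. by have := iVL a u 0; rewrite !addr0 iV0 addr0. Qed.
Lemma iV_sum (I : Type) (r : seq I) (F : I -> V) :
  iV (\sum_(j <- r) F j) = \sum_(j <- r) iV (F j).
Proof. exact: (big_morph _ iVD iV0). Qed.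
Lemma iVN u : iV (- u) = - iV u.
Proof. by rewrite -scaleN1r iVZ scaleN1r. Qed.
Lemma iVB u v : iV (u - v) = iV u - iV v. Proof. by rewrite iVD iVN. Qed.

Definition fe (q : 'I_n) (g : A) : V := [ffun i => if i == q then g else 0].
Lemma feD q g h : fe q (g + h) = fe q g + fe q h.
Proof. by apply/ffunP => i; rewrite !ffunE; case: eqP; rewrite ?addr0. Qed.
Lemma fe0 q : fe q 0 = 0.
Proof. by apply/ffunP => i; rewrite !ffunE; case: eqP. Qed.
Lemma feZ q (c : k) g : fe q (c *: g) = c *: fe q g.
Proof. by apply/ffunP => i; rewrite !ffunE; case: eqP; rewrite ?scaler0. Qed.
Lemma feN q g : fe q (- g) = - fe q g.
Proof. by apply/ffunP => i; rewrite !ffunE; case: eqP; rewrite ?oppr0. Qed.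
Lemma fe_sum q (I : Type) (r : seq I) (F : I -> A) :
  fe q (\sum_(j <- r) F j) = \sum_(j <- r) fe q (F j).
Proof. exact: (big_morph _ (feD q) (fe0 q)). Qed.

Lemma vact_fe p g f : vact (fe p g) f = g * f^`M(p).
Proof.
rewrite /vact (bigD1 p) //= ffunE eqxx big1 ?addr0 // => j /negbTE hj.
by rewrite ffunE hj mul0r.
Qed.

Lemma vbr_fe p q g h :
  vbracket (fe p g) (fe q h) = fe q (g * h^`M(p)) - fe p (h * g^`M(q)).
Proof.
apply/ffunP => i; rewrite /vbracket ffunE !vact_fe !ffunE.
by case: (i == q); case: (i == p); rewrite ?mderiv0 ?mulr0.
Qed.
Definition t (a g : A) (q : 'I_n) : T := iA a * iV (fe q g).
Lemma tDl a b g q : t (a + b) g q = t a g q + t b g q.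
Proof. by rewrite /t iAD mulrDl. Qed.
Lemma t0l g q : t 0 g q = 0. Proof. by rewrite /t iA0 mul0r. Qed.
Lemma tDr a g h q : t a (g + h) q = t a g q + t a h q.
Proof. by rewrite /t feD iVD mulrDr. Qed.
Lemma t0r a q : t a 0 q = 0. Proof. by rewrite /t fe0 iV0 mulr0. Qed.
Lemma tNl a g q : t (- a) g q = - t a g q. Proof. by rewrite /t iAN mulNr. Qed.
Lemma tNr a g q : t a (- g) q = - t a g q. Proof. by rewrite /t feN iVN mulrN. Qed.
Lemma t_suml (I : Type) (r : seq I) (F : I -> A) g q :
  t (\sum_(j <- r) F j) g q = \sum_(j <- r) t (F j) g q.
Proof. exact: (big_morph (fun a => t a g q) (fun a b => tDl a b g q) (t0l g q)). Qed.
Lemma t_sumr (I : Type) (r : seq I) a (F : I -> A) q :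
  t a (\sum_(j <- r) F j) q = \sum_(j <- r) t a (F j) q.
Proof. exact: (big_morph (fun g => t a g q) (fun g h => tDr a g h q) (t0r a q)). Qed.
Lemma tZl (c : k) a g q : t (c *: a) g q = c *: t a g q.
Proof. by rewrite /t iAZ scalerAl. Qed.
Lemma tZr (c : k) a g q : t a (c *: g) q = c *: t a g q.
Proof. by rewrite /t feZ iVZ scalerAr. Qed.

Lemma BR a g p b h q :
  t a g p * t b h q - t b h q * t a g p =
  t (a * b) (g * h^`M(p)) q - t (a * b) (h * g^`M(q)) p
  + t (a * (g * b^`M(p))) h q - t (b * (h * a^`M(q))) g p.
Proof.
rewrite /t.
set V1 := iV (fe p g); set V2 := iV (fe q h).
have E1 : iA a * V1 * (iA b * V2) =
          iA (a * b) * (V1 * V2) + iA (a * (g * b^`M(p))) * V2.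
  rewrite mulrA -(mulrA (iA a)) /V1 iVcomm vact_fe mulrDr mulrDl !mulrA -!iAM.
  by rewrite [a * (_ * _)]mulrA.
have E2 : iA b * V2 * (iA a * V1) =
          iA (a * b) * (V2 * V1) + iA (b * (h * a^`M(q))) * V1.
  rewrite mulrA -(mulrA (iA b)) /V2 iVcomm vact_fe mulrDr mulrDl !mulrA -!iAM.
  by rewrite [b * (_ * _)]mulrA [b * a]mulrC.
rewrite E1 E2 -mulrBr.
have -> : iV (fe q (g * h^`M(p))) - iV (fe p (h * g^`M(q))) = V1 * V2 - V2 * V1.
  by rewrite -iVB -vbr_fe iVbr.
by rewrite !mulrBr opprD addrACA addrA.
Qed.
Definition ev (q : 'I_n) (P : B) : T := \sum_(m <- msupp P) t (P@_m) 'X_[m] q.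

Lemma evE q P (d : nat) : (msize P <= d)%N ->
  ev q P = \sum_(m : 'X_{1..n < d}) t (P@_m) 'X_[m] q.
Proof.
move=> le_pi; set I : subFinType _ := 'X_{1..n < d}.
rewrite /ev (big_mksub I) ?msupp_uniq //=; first last.
  by move=> x /msize_mdeg_lt /leq_trans; apply.
rewrite big_rmcond //= => j /memN_msupp_eq0 ->.
by rewrite t0l.
Qed.

Lemma ev0 q : ev q 0 = 0.
Proof. by rewrite /ev msupp0 big_nil. Qed.

Lemma evD q P Q : ev q (P + Q) = ev q P + ev q Q.
Proof.
set d := maxn (msize P) (msize Q).
rewrite !(@evE q _ d) ?leq_maxl ?leq_maxr ?(leq_trans (msizeD_le _ _)) //.
by rewrite -big_split; apply: eq_bigr => m _; rewrite mcoeffD tDl.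
Qed.

Lemma ev_sum q (I : Type) (r : seq I) (F : I -> B) :
  ev q (\sum_(j <- r) F j) = \sum_(j <- r) ev q (F j).
Proof. exact: (big_morph _ (evD q) (ev0 q)). Qed.

Lemma evZ q (a : A) P : ev q (a *: P) = iA a * ev q P.
Proof.
rewrite !(@evE q _ (msize P)) ?msizeZ_le // mulr_sumr.
by apply: eq_bigr => m _; rewrite mcoeffZ /t iAM mulrA.
Qed.

Lemma evN q P : ev q (- P) = - ev q P.
Proof. by rewrite -scaleN1r evZ iAN iA1 mulN1r. Qed.
Lemma evB q P Q : ev q (P - Q) = ev q P - ev q Q.
Proof. by rewrite evD evN. Qed.

Lemma evXZ q (a : A) m : ev q (a *: 'X_[m]) = t a 'X_[m] q.
Proof.
have [->|nz] := eqVneq a 0; first by rewrite scale0r ev0 t0l.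
rewrite /ev (perm_big _ (msuppZ _ nz)) msuppX big_seq1.
by rewrite mcoeffZ mcoeffX eqxx mulr1.
Qed.

Lemma ev_emb q (a g : A) : ev q (a *: emb g) = t a g q.
Proof.
rewrite {1}(mpolyE g) emb_sum scaler_sumr ev_sum.
rewrite [in RHS](mpolyE g) t_sumr; apply: eq_bigr => m _.
by rewrite embZ embX scalerA evXZ tZr mulrC mul_mpolyC tZl.
Qed.
Lemma t_commA c g q f :
  t c g q * iA f = iA f * t c g q + iA (c * (g * f^`M(q))).
Proof.
rewrite /t -mulrA iVcomm vact_fe mulrDr mulrA iA_comm -mulrA -iAM.
by [].
Qed.

Lemma ev_commA q P f : ev q P * iA f = iA f * ev q P + iA (mu P * f^`M(q)).
Proof.
rewrite /ev mulr_suml mulr_sumr muE mulr_suml iA_sum -big_split.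
by apply: eq_bigr => m _; rewrite t_commA mulrA.
Qed.

Definition psi (u : V) : T := \sum_(q < n) ev q (Sh (u q)).

Lemma psi_commA u f : Lplus u -> psi u * iA f = iA f * psi u.
Proof.
move=> hu; rewrite /psi mulr_suml mulr_sumr; apply: eq_bigr => q _.
by rewrite ev_commA mu_Sh hu mpolyC0 mul0r iA0 addr0.
Qed.

Lemma comm_sum (R : pzRingType) (I J : Type) (r : seq I) (s : seq J)
    (x : I -> R) (y : J -> R) :
  (\sum_(i <- r) x i) * (\sum_(j <- s) y j) - (\sum_(j <- s) y j) * (\sum_(i <- r) x i)
  = \sum_(i <- r) \sum_(j <- s) (x i * y j - y j * x i).
Proof.
have E1 : (\sum_(i <- r) x i) * (\sum_(j <- s) y j) = \sum_(i <- r) \sum_(j <- s) x i * y j.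
  by rewrite mulr_suml; apply: eq_bigr => i _; rewrite mulr_sumr.
have E2 : (\sum_(j <- s) y j) * (\sum_(i <- r) x i) = \sum_(i <- r) \sum_(j <- s) y j * x i.
  by rewrite mulr_sumr; apply: eq_bigr => i _; rewrite mulr_suml.
by rewrite E1 E2 -sumrB; apply: eq_bigr => i _; rewrite -sumrB.
Qed.
Lemma sum4 (R : zmodType) (I J : Type) (r : seq I) (s : seq J) (a b c e : I -> J -> R) :
  \sum_(i <- r) \sum_(j <- s) (a i j - b i j + c i j - e i j) =
  \sum_(i <- r) \sum_(j <- s) a i j - \sum_(i <- r) \sum_(j <- s) b i j
  + \sum_(i <- r) \sum_(j <- s) c i j - \sum_(i <- r) \sum_(j <- s) e i j.
Proof.
rewrite -sumrB -big_split -sumrB /=; apply: eq_bigr => i _.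
by rewrite -sumrB -big_split -sumrB.
Qed.

Lemma evP q p (a b : A) l l' :
  ev q ((a *: 'X_[l]) * (b *: 'X_[l'])^`M(p)) = t (a * b) ('X_[l] * 'X_[l']^`M(p)) q.
Proof.
rewrite mderivZ -scalerAl -scalerAr scalerA.
have -> : ('X_[l] * 'X_[l']^`M(p) : B) = emb ('X_[l] * 'X_[l']^`M(p)).
  by rewrite embM -emb_deriv !embX.
by rewrite ev_emb.
Qed.

Lemma ev_br p q P Q :
  ev p P * ev q Q - ev q Q * ev p P =
  ev q (P * Q^`M(p)) - ev p (Q * P^`M(q)) + ev q (mu P *: mapd p Q)
  - ev p (mu Q *: mapd q P).
Proof.
set d := maxn (msize P) (msize Q).
have hP : (msize P <= d)%N := leq_maxl _ _.
have hQ : (msize Q <= d)%N := leq_maxr _ _.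
rewrite (@evE p P d hP) (@evE q Q d hQ) comm_sum.
under eq_bigr => l _ do under eq_bigr => l' _ do rewrite BR.
rewrite sum4.
have eP := mpolywE hP; have eQ := mpolywE hQ.
congr (_ - _ + _ - _).
- rewrite {2}eP {2}eQ raddf_sum /= mulr_suml ev_sum; apply: eq_bigr => l _.
  by rewrite mulr_sumr ev_sum; apply: eq_bigr => l' _; rewrite evP.
- rewrite {2}eP {2}eQ raddf_sum /= mulr_suml ev_sum exchange_big /=.
  apply: eq_bigr => l _; rewrite mulr_sumr ev_sum; apply: eq_bigr => l' _.
  by rewrite evP mulrC.
- rewrite (@mapdwE _ _ p Q d hQ) scaler_sumr ev_sum exchange_big /=.
  apply: eq_bigr => l' _; rewrite -t_suml scalerA evXZ (@muwE _ _ P d hP) mulr_suml.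
  by congr t; apply: eq_bigr => l _; rewrite mulrA.
- rewrite (@mapdwE _ _ q P d hP) scaler_sumr ev_sum.
  apply: eq_bigr => l _; rewrite -t_suml scalerA evXZ (@muwE _ _ Q d hQ) mulr_suml.
  by congr t; apply: eq_bigr => l' _; rewrite mulrA.
Qed.
Lemma psi_br u v : Lplus u -> Lplus v ->
  psi (vbracket u v) = psi u * psi v - psi v * psi u.
Proof.
move=> hu hv; apply: esym; rewrite /psi comm_sum.
under eq_bigr => p _ do under eq_bigr => q _ do
  rewrite ev_br !mu_Sh hu hv mpolyC0 !scale0r !ev0 !subr0 addr0 !chain -!ShM.
under eq_bigr => p _ do rewrite sumrB.
rewrite sumrB.
under [RHS]eq_bigr => q _ do rewrite /vbracket ffunE /vact ShB !Sh_sum evB !ev_sum.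
rewrite sumrB; congr (_ - _).
by rewrite exchange_big.
Qed.

Lemma ev1 i : ev i 1 = iV (fe i 1).
Proof.
by rewrite -(scale1r (1 : B)) -mpolyX0 evXZ /t iA1 mul1r mpolyX0.
Qed.

Lemma psi_commD i v : Lplus v -> iV (fe i 1) * psi v = psi v * iV (fe i 1).
Proof.
move=> hv; apply/eqP; rewrite -subr_eq0 -ev1 /psi mulr_sumr mulr_suml -sumrB.
apply/eqP; apply: big1 => q _.
rewrite ev_br mul1r -mpolyC1 mderivC mulr0 ev0 subr0 mapdC mderivC mpolyC0.
rewrite scaler0 ev0 subr0 mpolyC1 mu1 scale1r -evD chain mapd_Sh.
by rewrite subrr ev0.
Qed.
Lemma psi_lin (a : k) u v : psi (a *: u + v) = a *: psi u + psi v.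
Proof.
rewrite /psi scaler_sumr -big_split; apply: eq_bigr => q _.
by rewrite !ffunE ShD ShZ evD evZ iAC mulr_algl.
Qed.

Lemma ev_sumP q (I : Type) (r : seq I) (P : pred I) (F : I -> B) :
  ev q (\sum_(j <- r | P j) F j) = \sum_(j <- r | P j) ev q (F j).
Proof. exact: (big_morph _ (evD q) (ev0 q)). Qed.

Lemma ShX f e : Sh (f ^+ e) = Sh f ^+ e.
Proof. by elim: e => [|e IH]; rewrite ?expr0 ?Sh1 // !exprS ShM IH. Qed.
Lemma Sh_prod (I : Type) (r : seq I) (F : I -> A) :
  Sh (\prod_(j <- r) F j) = \prod_(j <- r) Sh (F j).
Proof. by elim: r => [|x r IH]; rewrite ?big_nil ?Sh1 // !big_cons ShM IH. Qed.

Lemma psi_xd m p : psi (xd k m p) = psiL iA iV m p.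
Proof.
rewrite /psi (bigD1 p) //= big1 ?addr0; last first.
  by move=> q /negbTE hq; rewrite ffunE hq Sh0 ev0.
rewrite ffunE eqxx mpolyXE_id Sh_prod.
under eq_bigr => i _ do rewrite ShX ShXU addrC.
rewrite prod_binom ev_sumP /psiL; apply: eq_bigr => l _.
by rewrite prod_term evXZ tZl.
Qed.
End Smash.

Unset Implicit Arguments.
Lemma iA_nat {k : fieldType} {n : nat} {T : algType k} {iA : {mpoly k[n]} -> T} {iV}
  (H : smash_rel iA iV) (e : nat) : iA e%:R = e%:R.
Proof.
elim: e => [|e IH]; first by rewrite (iA0 H).
by rewrite -addn1 !natrD (iAD H) IH (iA1 H).
Qed.


Theorem lemma3p4 (k : closedFieldType) (n : nat) (chark : [pchar k] =i pred0)
    (S : algType k) (X Dd : 'I_n -> S) (j : vfield k n -> S)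
    (HS : is_DUL X Dd j)
    (T : algType k) (iA : {mpoly k[n]} -> T) (iV : vfield k n -> T)
    (HT : is_smash iA iV) :
  exists phi : S -> T,
    [/\ is_alg_hom phi,
        (forall r s : 'X_{1..n},
           phi ((\prod_(i < n) X i ^+ r i) * (\prod_(i < n) Dd i ^+ s i))
           = iA 'X_[r] * (\prod_(i < n) iV (dvec k i) ^+ s i))
      & (forall (m : 'X_{1..n}) (p : 'I_n), m != 0%MM ->
           phi (j (xd k m p)) = psiL iA iV m p)].
Proof.
case: HS => _ Huniv; case: HT => Hsm _.
have dvecE : forall i, dvec k i = fe i 1.
  by move=> i; rewrite /dvec /xd /fe mpolyX0.
have rel : DUL_rel (fun i => iA 'X_i) (fun i => iV (dvec k i)) (psi iA iV).
  split; [split| | | |].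
  - by move=> i l; rewrite (iA_comm Hsm).
  - move=> i l; apply/eqP; rewrite -subr_eq0 -(iVbr Hsm) !dvecE vbr_fe.
    by rewrite -mpolyC1 !mderivC !mulr0 !fe0 subrr (iV0 Hsm).
  - move=> i l; rewrite (iVcomm Hsm) addrAC subrr add0r dvecE vact_fe mul1r mderivXU.
    by rewrite (iA_nat Hsm) eq_sym.
  - by move=> a u v _ _; rewrite (psi_lin Hsm).
  - by move=> u v hu hv; rewrite (psi_br Hsm).
  - by move=> i u hu; rewrite (psi_commA Hsm).
  - by move=> i u hu; rewrite dvecE (psi_commD Hsm).
have [phi [[phiD phiM phi1 phiZ] hX hD hj _]] := Huniv T _ _ _ rel.
have phiX : forall x e, phi (x ^+ e) = phi x ^+ e.
  by move=> x; elim=> [|e IH]; rewrite ?expr0 ?phi1 // !exprS phiM IH.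
have phiP : forall (F : 'I_n -> S), phi (\prod_(i < n) F i) = \prod_(i < n) phi (F i).
  by move=> F; apply: (big_morph phi phiM phi1).
exists phi; split => //.
- move=> r s; rewrite phiM !phiP.
  congr (_ * _); last by apply: eq_bigr => i _; rewrite phiX hD.
  rewrite mpolyXE_id.
  elim/big_rec2: _ => [|i x y _ ->]; first by rewrite (iA1 Hsm).
  rewrite phiX hX (iAM Hsm).
  by congr (_ * _); elim: (r i) => [|e IH]; rewrite ?expr0 ?(iA1 Hsm) // !exprS (iAM Hsm) IH.
- move=> m p hm; rewrite hj ?(psi_xd Hsm) //.
  move=> i; rewrite ffunE; case: (i == p); last by rewrite mcoeff0.
  by rewrite mcoeffX (negbTE hm).
Qed.
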